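(* Let $\mathcal F$ be a set of oriented trees which is a complete set of obstructions for a digraph $H$. Then $\mathrm{Sproink}(\mathcal F)=\bigcup_{T\in\mathcal F}\mathrm{Sproink}(T)$ is a complete set of obstructions for the arc graph $\delta H$.
   Context: Digraphs are finite, $G=(V,A)$ with $A\subseteq V\times V$; homomorphisms are arc-preserving vertex maps, $G\to H$ means one exists. A set $\mathcal F$ of digraphs is a complete set of obstructions for $H$ if for every digraph $G$: $G\to H$ iff no $F\in\mathcal F$ satisfies $F\to G$. An oriented tree is a digraph whose underlying undirected graph is a tree. The arc graph of $G=(V,A)$ is $\delta G=(A,\delta A)$ with $\delta A=\{((u,v),(v,w)) : (u,v),(v,w)\in A\}$. A tree $F$ has height at most one if its vertex set is partitioned into two sets $0_F,1_F$ such that every arc $(x,y)$ of $F$ has $x\in 0_F$, $y\in 1_F$ (if $F$ has no arcs, it is a single vertex lying in one of the two sets). Sproinks: let $T$ be an oriented tree. For every vertex $u$ of $T$ choose a tree $F(u)$ of height at most one (with a partition $0_{F(u)},1_{F(u)}$), the $F(u)$ pairwise disjoint. For every arc $e$ of $T$ incident with $u$ fix a vertex $v(e,F(u))$ of $F(u)$ with $v(e,F(u))\in 1_{F(u)}$ if $u$ is the initial vertex of $e$ and $v(e,F(u))\in 0_{F(u)}$ if $u$ is the terminal vertex of $e$. The tree obtained from the disjoint union of all $F(u)$ by identifying $v(e,F(u))$ with $v(e,F(u'))$ for every arc $e=(u,u')$ of $T$ is a sproink of $T$; $\mathrm{Sproink}(T)$ is the set of all sproinks of $T$. *)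

(* Defs.v *)
From mathcomp Require Import all_boot.
Set Implicit Arguments. Unset Strict Implicit. Unset Printing Implicit Defensive.

Record digraph := Digraph { dvert : finType; darc : rel dvert }.
Arguments darc : clear implicits.

Definition hom (G H : digraph) : Prop :=
  exists f : dvert G -> dvert H,
    forall x y, darc G x y -> darc H (f x) (f y).

Definition complete_obstructions (Fs : digraph -> Prop) (H : digraph) : Prop :=
  forall G : digraph, hom G H <-> ~ (exists F, Fs F /\ hom F G).

Definition oriented_tree (T : digraph) : Prop :=
  [/\ forall x, ~~ darc T x x,
      forall x y, darc T x y -> ~~ darc T y x,
      0 < #|dvert T|,
      #|[pred p : dvert T * dvert T | darc T p.1 p.2]| = #|dvert T|.-1
    & forall x y, connect [rel a b | darc T a b || darc T b a] x y].

(* Tree of height at most one w.r.t. a partition given by [part]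
   (part x = false : x in 0_F ; part x = true : x in 1_F). *)
Definition height_le1 (F : digraph) (part : dvert F -> bool) : Prop :=
  forall x y, darc F x y -> part x = false /\ part y = true.

Definition arc_vert (H : digraph) : finType :=
  {p : dvert H * dvert H | darc H p.1 p.2}.

Definition arc_graph (H : digraph) : digraph :=
  @Digraph (arc_vert H)
    [rel e f : arc_vert H | (val e).2 == (val f).1].

(* S is a sproink of the oriented tree T: S is (isomorphic to) the quotient
   of the disjoint union of the trees F u (u vertex of T) of height at most
   one, by the equivalence relation generated by identifying
   vout u u' (in F u, a vertex of 1_{F u}) with vin u u' (in F u', a vertex
   of 0_{F u'}) for every arc (u,u') of T. The quotient is given by a
   surjective map q whose fibres are exactly the equivalence classes; arcs of
   S are exactly the images of the arcs of the F u. *)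
Definition is_sproink (T S : digraph) : Prop :=
  exists (F : dvert T -> digraph)
         (part : forall u, dvert (F u) -> bool)
         (vout : forall u u' : dvert T, dvert (F u))
         (vin  : forall u u' : dvert T, dvert (F u')),
  let W := fun u => dvert (F u) in
  let ident : rel {u : dvert T & W u} :=
    fun p q => [exists u, exists u',
      darc T u u' &&
      (((p == Tagged W (vout u u')) && (q == Tagged W (vin u u'))) ||
       ((q == Tagged W (vout u u')) && (p == Tagged W (vin u u'))))] in
  [/\ forall u, oriented_tree (F u) /\ height_le1 (part u),
      forall u u', darc T u u' -> part u (vout u u') = true /\ part u' (vin u u') = false
    & exists q : {u : dvert T & W u} -> dvert S,
      [/\ forall s, exists p, q p = s,
          forall p p', q p = q p' <-> connect ident p p'
        & forall a b, darc S a b <->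
            exists u (x y : W u), darc (F u) x y /\
              q (Tagged W x) = a /\ q (Tagged W y) = b]].

Definition Sproinks (Fs : digraph -> Prop) (S : digraph) : Prop :=
  exists T, Fs T /\ is_sproink T S.

(* Main.v *)
Require Import Defs.
From mathcomp Require Import all_boot.
Set Implicit Arguments. Unset Strict Implicit. Unset Printing Implicit Defensive.

Lemma connect_inv (T : finType) (U : Type) (e : rel T) (k : T -> U) :
  (forall a b, e a b -> k a = k b) -> forall a b, connect e a b -> k a = k b.
Proof.
move=> He a b /connectP [p]; elim: p a => [|c p IH] a /=; first by move=> _ ->.
by case/andP=> /He -> /IH.
Qed.

Lemma connect_map (A B : finType) (r : rel A) (e : rel B) (k : A -> B) :
  connect_sym e -> (forall a b, r a b -> connect e (k a) (k b)) ->
  forall a b, connect [rel x y | r x y || r y x] a b -> connect e (k a) (k b).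
Proof.
move=> Hs Hr a b /connectP [p]; elim: p a => [|c p IH] a /=; first by move=> _ ->.
case/andP=> Hac Hp Hb; apply: connect_trans (IH _ Hp Hb).
by case/orP: Hac => [/Hr //|/Hr]; rewrite Hs.
Qed.

Definition simG (G : digraph) : rel (dvert G * bool) := fun a b =>
  (a.2 && ~~ b.2 && darc G a.1 b.1) || (b.2 && ~~ a.2 && darc G b.1 a.1).

Arguments simG : clear implicits.

Lemma simG_sym G : symmetric (simG G).
Proof. by move=> a b; rewrite /simG orbC. Qed.

Lemma simG_csym G : connect_sym (simG G).
Proof. apply: sym_connect_sym; exact: simG_sym. Qed.

Arguments simG_csym : clear implicits.

Definition relD (G : digraph) : rel (dvert G * bool) := fun a b =>
  [exists z, connect (simG G) a (z, false) && connect (simG G) b (z, true)].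

Arguments relD : clear implicits.

Definition Dg (G : digraph) := @Digraph (dvert G * bool)%type (relD G).

Lemma DH (G H : digraph) : hom G (arc_graph H) <-> hom (Dg G) H.
Proof.
split.
- case=> f Hf.
  pose k (a : dvert G * bool) := if a.2 then (val (f a.1)).2 else (val (f a.1)).1.
  have Hk : forall a b, simG G a b -> k a = k b.
    move=> [x bx] [y bY]; rewrite /simG /k /=.
    case/orP=> /andP [/andP [-> /negbTE ->]] /Hf /eqP // ->.
  exists k => a b /existsP [z /andP [Ha Hb]].
  rewrite (connect_inv Hk Ha) (connect_inv Hk Hb) /k /=.
  exact: (valP (f z)).
- case=> g Hg.
  pose r := root (simG G).
  have Hf : forall x, darc H (g (r (x, false))) (g (r (x, true))).
    move=> x; apply: Hg; apply/existsP; exists x.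
    by rewrite !(simG_csym G (r _)) !connect_root.
  exists (fun x => exist (fun p : dvert H * dvert H => darc H p.1 p.2) (g (r (x, false)), g (r (x, true))) (Hf x)).
  move=> x y Hxy /=; apply/eqP; congr g; apply/(rootP (simG_csym G)).
  by apply: connect1; rewrite /simG /= Hxy.
Qed.

Lemma sproink_to_D (T S G : digraph) :
  is_sproink T S -> hom S G -> hom T (Dg G).
Proof.
case=> F [part [vout [vin]]] /= [Htree Hio [q [Hsurj Hq HS]]] [g Hg].
pose lab u (x : dvert (F u)) := (g (q (Tagged (fun u => dvert (F u)) x)), ~~ part u x).
have Hex : forall u, exists d, [exists x : dvert (F u), d == lab u x].
  move=> u; have [[_ _ /card_gt0P [x _] _ _] _] := Htree u.
  by exists (lab u x); apply/existsP; exists x.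
have Hcl : forall u x y, connect (simG G) (lab u x) (lab u y).
  move=> u x y; have [[_ _ _ _ Hc] Hh] := Htree u.
  apply: (connect_map (simG_csym G) _ (Hc x y)) => a b Hab.
  apply: connect1; rewrite /lab; have [-> ->] := Hh _ _ Hab.
  rewrite /simG /= Hg //; apply/HS; by exists u, a, b.
exists (fun u => xchoose (Hex u)) => u u' Huu'.
have [/existsP [x0 /eqP ->] /existsP [x1 /eqP ->]] :=
  (xchooseP (Hex u), xchooseP (Hex u')).
apply/existsP; exists (g (q (Tagged (fun u => dvert (F u)) (vout u u')))).
have [Ho Hi] := Hio u u' Huu'.
have Heq : q (Tagged (fun u => dvert (F u)) (vout u u')) =
          q (Tagged (fun u => dvert (F u)) (vin u u')).
  apply/Hq; apply: connect1; apply/existsP; exists u; apply/existsP; exists u'.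
  by rewrite Huu' /=; apply/orP; left; apply/andP; split; apply/eqP.
apply/andP; split.
- by move: (Hcl u x0 (vout u u')); rewrite /lab Ho.
- by move: (Hcl u' x1 (vin u u')); rewrite /lab Hi -Heq.
Qed.

Definition zz_arc (n : nat) (pt : nat -> bool) : rel 'I_n.+1 :=
  fun i j => ((j == i.+1 :> nat) || (i == j.+1 :> nat)) && ~~ pt i && pt j.

Arguments zz_arc : clear implicits.

Definition ZZ n pt := @Digraph ('I_n.+1) (zz_arc n pt).

Arguments ZZ : clear implicits.

Lemma ZZ_tree n pt : (forall i, i < n -> pt i != pt i.+1) ->
  oriented_tree (ZZ n pt) /\ height_le1 (fun i : dvert (ZZ n pt) => pt i).
Proof.
move=> Halt; split; last first.
  by move=> x y /andP [/andP [_ /negbTE ->] ->].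
split.
- by move=> x; rewrite /= /zz_arc; case: (pt x); rewrite ?andbF.
- by move=> x y /andP [/andP [_ /negbTE Hx] Hy]; rewrite /= /zz_arc Hx andbF.
- by rewrite card_ord.
- pose phi (k : 'I_n) : 'I_n.+1 * 'I_n.+1 :=
    if pt k then (lift ord0 k, widen_ord (leqnSn n) k)
    else (widen_ord (leqnSn n) k, lift ord0 k).
  have Hmin : forall k, minn (phi k).1 (phi k).2 = k.
    move=> k; rewrite /phi; case: (pt k) => /=; rewrite /bump /= add1n.
      by rewrite minnC; apply/minn_idPl; apply: leqnSn.
    by apply/minn_idPl; apply: leqnSn.
  have phi_inj : injective phi.
    by move=> k k' Hk; apply/val_inj; rewrite /= -Hmin Hk Hmin.
  rewrite card_ord /= -[n in RHS]card_ord -(card_image phi_inj); apply: eq_card.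
  move=> [i j]; rewrite !inE /=; apply/idP/imageP.
  - case/andP=> [/andP [/orP [] /eqP Hij Hi Hj]].
    + have Hin : i < n by rewrite -ltnS -Hij.
      exists (Ordinal Hin) => //; rewrite /phi /= (negbTE Hi).
      by congr pair; apply/val_inj; rewrite /= ?Hij /bump /= ?add1n.
    + have Hjn : j < n by rewrite -ltnS -Hij.
      exists (Ordinal Hjn) => //; rewrite /phi /= Hj.
      by congr pair; apply/val_inj; rewrite /= ?Hij /bump /= ?add1n.
  - move=> [k _]; have := Halt k (ltn_ord k); rewrite /phi.
    case Hk: (pt k) => Hk1 [-> ->]; rewrite /= /zz_arc /= /bump /= ?add1n ?Hk ?eqxx ?orbT /=.
      by move: Hk1; case: (pt k.+1).
    by move: Hk1; case: (pt k.+1).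
- set R := SimplRel _.
  have Rs : connect_sym R.
    by apply: sym_connect_sym => a b; rewrite /R /= orbC.
  have H0 : forall m (Hm : m < n.+1), connect R ord0 (Ordinal Hm).
    elim=> [|m IH] Hm.
      by have -> : Ordinal Hm = ord0 by apply/val_inj.
    apply: connect_trans (IH (ltnW Hm)) (connect1 _).
    have := Halt m Hm; rewrite /R /= /zz_arc /= eqxx orbT.
    by case: (pt m); case: (pt m.+1).
  move=> x y; apply: connect_trans (_ : connect R x ord0) _.
    by rewrite Rs; case: x => x Hx; apply: H0.
  by case: y => y Hy; apply: H0.
Qed.

Lemma walk_ex (A : finType) (e : rel A) (a : A) (L : seq A) :
  connect_sym e -> (forall c, c \in L -> connect e a c) ->
  exists s, path e a s && all (fun c => c \in a :: s) L.
Proof.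
move=> Hs; elim: L => [|c L IH] HL; first by exists [::].
have [s /andP [Hp Ha]] : exists s, path e a s && all (fun c => c \in a :: s) L.
  by apply: IH => c' Hc'; apply: HL; rewrite inE Hc' orbT.
have Hlc : connect e (last a s) c.
  apply: connect_trans (HL c (mem_head _ _)).
  by rewrite Hs; apply: (path_connect Hp); apply: mem_last.
case/connectP: Hlc => p Hp2 Hc.
exists (s ++ p); rewrite cat_path Hp Hp2 /= Hc -last_cat mem_last /=.
apply: sub_all Ha => d; rewrite /= !inE mem_cat => /orP [->|->] //.
by rewrite orbT.
Qed.


Definition clsL (G : digraph) (d : dvert G * bool) : seq (dvert G * bool) :=
  enum [pred c | connect (simG G) d c].

Arguments clsL : clear implicits.
Lemma walk_cls (G : digraph) (d : dvert G * bool) :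
  exists s, path (simG G) d s && all (fun c => c \in d :: s) (clsL G d).
Proof.
apply: walk_ex; first exact: simG_csym.
by move=> c; rewrite mem_enum.
Qed.

Arguments walk_cls : clear implicits.
Definition wlk G d := xchoose (walk_cls G d).

Arguments wlk : clear implicits.
Definition pt G (d : dvert G * bool) (i : nat) := ~~ (nth d (d :: wlk G d) i).2.

Arguments pt : clear implicits.
Lemma wlk_step G d i : i < size (wlk G d) ->
  simG G (nth d (d :: wlk G d) i) (nth d (d :: wlk G d) i.+1).
Proof.
move=> Hi; have /andP [/(pathP d) Hp _] := xchooseP (walk_cls G d).
exact: Hp.
Qed.

Lemma simG_alt G a b : simG G a b -> a.2 != b.2.
Proof. by case/orP => /andP [/andP [-> /negbTE ->]]. Qed.

Lemma simG_arc G a b : simG G a b -> a.2 -> ~~ b.2 -> darc G a.1 b.1.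
Proof.
case/orP => /andP [/andP [Ha Hb] Hab] //.
by rewrite Ha.
Qed.

Lemma ZZ_alt G d i : i < size (wlk G d) -> pt G d i != pt G d i.+1.
Proof. by move/wlk_step/simG_alt; rewrite /pt; case: (_.2); case: (_.2). Qed.

Lemma ZZ_arcG G d (i j : 'I_(size (wlk G d)).+1) :
  zz_arc _ (pt G d) i j ->
  darc G (nth d (d :: wlk G d) i).1 (nth d (d :: wlk G d) j).1.
Proof.
rewrite /zz_arc /pt negbK => /andP [/andP [/orP [] /eqP Hij Hi Hj]].
- apply: simG_arc Hi Hj; rewrite Hij; apply: wlk_step.
  by rewrite -ltnS -Hij.
- apply: simG_arc Hi Hj; rewrite simG_sym Hij; apply: wlk_step.
  by rewrite -ltnS -Hij.
Qed.

Lemma wlk_idx G d c : connect (simG G) d c ->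
  nth d (d :: wlk G d) (@inord (size (wlk G d)) (index c (d :: wlk G d))) = c.
Proof.
move=> Hc; have /andP [_ /allP Ha] := xchooseP (walk_cls G d).
have Hin : c \in d :: wlk G d by apply: Ha; rewrite mem_enum.
rewrite inordK; first exact: nth_index.
by have := index_mem c (d :: wlk G d); rewrite Hin.
Qed.

Definition zpick (G : digraph) (a b : dvert G * bool) : dvert G :=
  odflt a.1 [pick z | connect (simG G) a (z, false) && connect (simG G) b (z, true)].

Arguments zpick : clear implicits.
Lemma zpick_spec G a b : relD G a b ->
  connect (simG G) a (zpick G a b, false) && connect (simG G) b (zpick G a b, true).
Proof.
move/existsP=> [z Hz]; rewrite /zpick; case: pickP => [z' -> //|/(_ z)].
by rewrite Hz.
Qed.

Lemma D_to_sproink (T G : digraph) :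
  hom T (Dg G) -> exists S, is_sproink T S /\ hom S G.
Proof.
case=> h Hh.
pose s u := wlk G (h u).
pose F u := ZZ (size (s u)) (pt G (h u)).
pose W u := dvert (F u).
pose z u u' := zpick G (h u) (h u').
pose vout u u' : W u := @inord (size (s u)) (index (z u u', false) (h u :: s u)).
pose vin u u' : W u' := @inord (size (s u')) (index (z u u', true) (h u' :: s u')).
pose X := {u : dvert T & W u}.
pose ident : rel X := fun p q => [exists u, exists u',
      darc T u u' &&
      (((p == Tagged W (vout u u')) && (q == Tagged W (vin u u'))) ||
       ((q == Tagged W (vout u u')) && (p == Tagged W (vin u u'))))].
have ident_sym : connect_sym ident.
  apply: sym_connect_sym => p q; apply: eq_existsb => u; apply: eq_existsb => u'.
  by rewrite orbC.
pose lab (p : X) := nth (h (tag p)) (h (tag p) :: s (tag p)) (tagged p).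
have Hvout : forall u u', darc T u u' -> lab (Tagged W (vout u u')) = (z u u', false).
  move=> u u' /Hh /zpick_spec /andP [H1 _]; exact: wlk_idx H1.
have Hvin : forall u u', darc T u u' -> lab (Tagged W (vin u u')) = (z u u', true).
  move=> u u' /Hh /zpick_spec /andP [_ H2]; exact: wlk_idx H2.
have lab_inv : forall p q, ident p q -> (lab p).1 = (lab q).1.
  move=> p q /existsP [u /existsP [u' /andP [Huu' /orP [] /andP [/eqP -> /eqP ->]]]].
    by rewrite Hvout // Hvin.
  by rewrite Hvout // Hvin.
pose V := {p : X | root ident p == p}.
pose qm (p : X) : V := exist _ (root ident p) (introT eqP (root_root ident_sym p)).
pose arcS : rel V := fun a b => [exists u, [exists x : W u, [exists y : W u,
   darc (F u) x y && (qm (Tagged W x) == a) && (qm (Tagged W y) == b)]]].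
have lab_root : forall p, (lab (root ident p)).1 = (lab p).1.
  move=> p; symmetry; apply: (connect_inv lab_inv); exact: connect_root.
exists (@Digraph V arcS); split.
- exists F, (fun u (i : W u) => pt G (h u) i), vout, vin.
  split.
  + move=> u; apply: ZZ_tree => i Hi; exact: ZZ_alt.
  + move=> u u' Huu'; rewrite /pt.
    have := Hvout u u' Huu'; have := Hvin u u' Huu'; rewrite /lab /= => -> -> //.
  + exists qm; split.
    * move=> [p Hp]; exists p; apply/val_inj => /=; exact/eqP.
    * move=> p p'; split => [Hqq | Hc].
        by apply/(rootP ident_sym); move: Hqq => /(congr1 val).
      by apply/val_inj => /=; apply/(rootP ident_sym).
    * move=> a b; split.
        move/existsP=> [u /existsP [x /existsP [y /andP [/andP [Hxy /eqP Ha] /eqP Hb]]]].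
        by exists u, x, y.
      move=> [u [x [y [Hxy [Ha Hb]]]]].
      apply/existsP; exists u; apply/existsP; exists x; apply/existsP; exists y.
      by rewrite Hxy Ha Hb !eqxx.
- exists (fun a : V => (lab (val a)).1) => a b.
  move/existsP=> [u /existsP [x /existsP [y /andP [/andP [Hxy /eqP <-] /eqP <-]]]].
  rewrite /= !lab_root.
  exact: ZZ_arcG Hxy.
Qed.

Lemma hom_comp (A B C : digraph) : hom A B -> hom B C -> hom A C.
Proof. by case=> f Hf [g Hg]; exists (fun x => g (f x)) => x y /Hf /Hg. Qed.

Theorem theorem2p3 (Fs : digraph -> Prop) (H : digraph) :
  (forall T, Fs T -> oriented_tree T) ->
  complete_obstructions Fs H ->
  complete_obstructions (Sproinks Fs) (arc_graph H).
Proof.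
move=> _ Hc G; split.
- move=> /DH HDH [S [[T [HT Hsp]] HSG]].
  have HTH := hom_comp (sproink_to_D Hsp HSG) HDH.
  apply: ((Hc T).1 HTH); exists T; split => //.
  by exists id.
- move=> Hn; apply/DH; apply/(Hc (Dg G)) => -[T [HT HTD]].
  have [S [Hsp HSG]] := D_to_sproink HTD.
  by apply: Hn; exists S; split => //; exists T.
Qed.
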